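(* Let $S$ be a finite set, $T\ge1$, and let $p$ be the law of a Markov chain $(Y_1,\dots,Y_T)$ of order $m$ on $S^T$, where $1\le m\le T$. For integers $1\le a\le b\le T$ write $p(s_a^b):=\mathbf P(Y_a^b=s_a^b)$, and for every positive integer $k$ define $$\bar R_k(s^T):=-\frac1T\ln\prod_{j=1-k}^{T-1}p\big(s_{(j+1)\vee1}^{(j+k)\wedge T}\big),\qquad \bar R_\infty(s^T):=-\frac1T\ln p(s^T).$$ Then for every $s^T\in S^T$ and every integer $k\ge m$, $$\bar R_k(s^T)=\bar R_m(s^T)+(k-m)\bar R_\infty(s^T).$$
   Context: $s_a^b=(s_a,\dots,s_b)$; $\vee=\max$, $\wedge=\min$; $\ln0=-\infty$. A Markov chain of order $m$ is one in which the conditional law of $Y_t$ given $Y_1^{t-1}$ depends only on $Y_{t-m}^{t-1}$ (for $t>m$). *)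

(* Defs.v *)
From HB Require Import structures.
From mathcomp Require Import all_boot all_order all_algebra.
From mathcomp Require Import reals constructive_ereal exp.
Set Implicit Arguments. Unset Strict Implicit. Unset Printing Implicit Defensive.
Import Order.TTheory GRing.Theory Num.Theory.
Local Open Scope ring_scope.

(* A word s^T = (s_1,...,s_T) is a finite function 'I_T -> S;
   the paper's position i (1-based) is the ordinal i-1. *)
Definition word (S : finType) (T : nat) := {ffun 'I_T -> S}.

Definition is_law (R : realType) (S : finType) (T : nat) (p : word S T -> R) :=
  (forall t, 0 <= p t) /\ \sum_(t : word S T) p t = 1.

(* p(s_a^b) = P(Y_a^b = s_a^b), positions 1-based *)
Definition marg (R : realType) (S : finType) (T : nat) (p : word S T -> R)
    (a b : nat) (s : word S T) : R :=
  \sum_(t : word S T | [forall i : 'I_T, ((a <= i.+1 <= b)%N) ==> (t i == s i)]) p t.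

(* Markov chain of order m: for m < t <= T, the conditional law of Y_t given
   Y_1^{t-1} = s_1^{t-1} (defined when P(Y_1^{t-1}=s_1^{t-1}) > 0) depends only
   on s_{t-m}^{t-1} (and of course the value s_t). *)
Definition markov_order (R : realType) (S : finType) (T : nat) (m : nat)
    (p : word S T -> R) :=
  forall t : nat, (m < t <= T)%N ->
  forall s s' : word S T,
    (forall i : 'I_T, (t - m <= i.+1 <= t)%N -> s i = s' i) ->
    0 < marg p 1 (t - 1) s -> 0 < marg p 1 (t - 1) s' ->
    marg p 1 t s / marg p 1 (t - 1) s = marg p 1 t s' / marg p 1 (t - 1) s'.

Definition eln (R : realType) (x : R) : \bar R :=
  if x == 0 then -oo%E else (ln x)%:E.

(* \bar R_k(s^T) = -(1/T) ln prod_{j=1-k}^{T-1} p(s_{(j+1) v 1}^{(j+k) ^ T}).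
   Reindexed by j' = j + k - 1 in [0, T+k-2]:
   (j+1) v 1 = maxn (j'+2-k) 1 (truncated nat subtraction), (j+k) ^ T = minn (j'+1) T. *)
Definition Rbar (R : realType) (S : finType) (T : nat) (p : word S T -> R)
    (k : nat) (s : word S T) : \bar R :=
  (- ((T%:R)^-1)%:E * eln (\prod_(j < T + k - 1)
        marg p (maxn (j.+2 - k) 1) (minn j.+1 T) s))%E.

Definition Rbar_inf (R : realType) (S : finType) (T : nat) (p : word S T -> R)
    (s : word S T) : \bar R :=
  (- ((T%:R)^-1)%:E * eln (p s))%E.

(* Main.v *)
Require Import Defs.
From HB Require Import structures.
From mathcomp Require Import all_boot all_order all_algebra.
From mathcomp Require Import reals constructive_ereal exp.
From mathcomp Require Import zify ring lra.
Import Order.TTheory GRing.Theory Num.Theory.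
Local Open Scope ring_scope.

Section S.
Variables (R : realType) (S : finType) (T m : nat) (p : word S T -> R).
Hypothesis law : is_law p.
Hypothesis mk : markov_order m p.

Lemma marg_ge0 a b s : 0 <= marg p a b s.
Proof. by apply: sumr_ge0 => t _; case: law. Qed.

Lemma marg_mono a b b' s : (b <= b')%N -> marg p a b' s <= marg p a b s.
Proof.
move=> bb; rewrite /marg [X in X <= _]big_mkcond [X in _ <= X]big_mkcond /=.
apply: ler_sum => t _; case: ifP => H1; case: ifP => H2 //; last by case: law.
exfalso; move/negP: H2; apply; apply/forallP => i; move/forallP: H1 => /(_ i).
move=> Hi; apply/implyP => /andP[h1 h2]; apply: (implyP Hi); rewrite h1 /=; lia.
Qed.

Lemma marg_split a b s : (1 <= a)%N -> (a <= b.+1)%N ->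
  marg p a b s = \sum_(w : word S T | [forall i : 'I_T, (a <= i.+1)%N ==> (w i == s i)]) marg p 1 b w.
Proof.
move=> a1 ab; rewrite /marg.
rewrite (@partition_big _ _ _ _ _ {ffun 'I_T -> S} _ (fun v : {ffun 'I_T -> S} => [ffun i : 'I_T => if (i.+1 <= b)%N then v i else s i])
   (fun w : {ffun 'I_T -> S} => [forall i : 'I_T, (a <= i.+1)%N ==> (w i == s i)])) /=; last first.
  move=> v /forallP Hv; apply/forallP => i; rewrite ffunE; apply/implyP => ai.
  by case: ifP => ib //; move: (Hv i); rewrite ai ib.
apply: eq_bigr => w /forallP Hw; apply: eq_bigl => v.
apply/idP/idP => [/andP[/forallP HP /eqP <-] | /forallP H].
  by apply/forallP => i; rewrite ffunE; case Hib: (i < b)%N => //=.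
apply/andP; split.
  apply/forallP => i; apply/implyP => /andP[ai ib].
  move: (H i); rewrite ib /= => /eqP ->; by move: (Hw i); rewrite ai.
apply/eqP/ffunP => i; rewrite ffunE; case: ifP => ib.
  by move: (H i); rewrite ib /= => /eqP.
have ai : (a <= i.+1)%N by move/negbT: ib; rewrite -leqNgt; lia.
by move: (Hw i); rewrite ai => /eqP.
Qed.

Lemma marg0 a b b' s : (b <= b')%N -> marg p a b s = 0 -> marg p a b' s = 0.
Proof.
move=> bb H; apply/le_anti/andP; split; last exact: marg_ge0.
by rewrite -H marg_mono.
Qed.

Lemma markov_pt t (u s : word S T) : (m < t <= T)%N ->
  (forall i : 'I_T, (t - m <= i.+1 <= t)%N -> u i = s i) ->
  marg p 1 (t-1) s * marg p 1 t u = marg p 1 t s * marg p 1 (t-1) u.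
Proof.
move=> tm Hu.
move: (marg_ge0 1 (t-1) s); rewrite le0r => /orP[/eqP ds0|dsp].
  by rewrite ds0 (@marg0 1 (t-1) t s (leq_subr 1 t) ds0) !mul0r.
move: (marg_ge0 1 (t-1) u); rewrite le0r => /orP[/eqP du0|dup].
  by rewrite du0 (@marg0 1 (t-1) t u (leq_subr 1 t) du0) !mulr0.
have E := @mk t tm u s Hu dup dsp.
have -> : marg p 1 t u = marg p 1 t s / marg p 1 (t - 1) s * marg p 1 (t-1) u.
  by rewrite -E divfK // gt_eqF.
field; by rewrite gt_eqF.
Qed.

Lemma keyK a t (s : word S T) : (1 <= a)%N -> (a <= t - m)%N -> (m < t <= T)%N ->
  marg p 1 (t-1) s * marg p a t s = marg p 1 t s * marg p a (t-1) s.
Proof.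
move=> a1 atm tm.
rewrite (@marg_split a t s a1) ?(@marg_split a (t-1) s a1); try lia.
rewrite !mulr_sumr; apply: eq_bigr => w /forallP Hw.
rewrite [X in X = _]mulrC [X in _ = X]mulrC -markov_pt //.
move=> i /andP[h1 h2]; apply/esym/eqP; move: (Hw i) => /implyP; apply; lia.
Qed.

Lemma keyK' k n (s : word S T) : (1 <= m)%N -> (m <= k)%N -> (1 <= n)%N -> (n < T)%N ->
  marg p 1 n s * marg p (maxn (n.+1 - k) 1) n.+1 s =
  marg p 1 n.+1 s * marg p (maxn (n.+1 - k) 1) n s.
Proof.
move=> m1 mk' n1 nT.
case: (leqP (n.+1 - k) 1) => H.
  by rewrite mulrC.
by move: (@keyK (n.+1 - k) n.+1 s); rewrite subn1 /=; apply; lia.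
Qed.

Lemma chain k (s : word S T) n : (1 <= m)%N -> (m <= k)%N -> (n < T)%N ->
  \prod_(j < n.+1) marg p (maxn (j.+2 - k.+1) 1) (minn j.+1 T) s =
  marg p 1 n.+1 s * \prod_(j < n) marg p (maxn (j.+2 - k) 1) (minn j.+1 T) s.
Proof.
move=> m1 mk'; elim: n => [|n IH] nT.
  rewrite big_ord1 big_ord0 mulr1 /=.
  congr (marg p _ _ s); lia.
rewrite big_ord_recr IH; last by lia.
rewrite big_ord_recr /=.
have -> : minn n.+2 T = n.+2 by lia.
have -> : minn n.+1 T = n.+1 by lia.
have -> : (n.+3 - k.+1 = n.+2 - k)%N by lia.
have K := @keyK' k n.+1 s m1 mk' (ltn0Sn n) nT.
set B := \prod_(_ < _) _.
transitivity (B * (marg p 1 n.+1 s * marg p (maxn (n.+2 - k) 1) n.+2 s)); first ring.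
by rewrite K; ring.
Qed.

Lemma margT (s : word S T) : marg p 1 T s = p s.
Proof.
rewrite /marg (big_pred1 s) // => t /=; apply/forallP/eqP => [H | ->].
  by apply/ffunP => i; apply/eqP; move: (H i); rewrite ltn_ord.
by move=> i; rewrite eqxx implybT.
Qed.

Lemma step k (s : word S T) : (1 <= m)%N -> (m <= k)%N -> (1 <= T)%N ->
  \prod_(j < T + k.+1 - 1) marg p (maxn (j.+2 - k.+1) 1) (minn j.+1 T) s =
  p s * \prod_(j < T + k - 1) marg p (maxn (j.+2 - k) 1) (minn j.+1 T) s.
Proof.
move=> m1 mk' T1.
rewrite -(big_mkord (fun _ => true) (fun j => marg p (maxn (j.+2 - k.+1) 1) (minn j.+1 T) s)) -(big_mkord (fun _ => true) (fun j => marg p (maxn (j.+2 - k) 1) (minn j.+1 T) s)).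
rewrite (@big_cat_nat _ _ _ T) /=; [|lia|lia].
rewrite (@big_cat_nat _ _ _ T.-1 0 (T + k - 1)) /=; [|lia|lia].
have ET : T = T.-1.+1 by lia.
rewrite {1}ET big_mkord chain; [|lia|lia|lia].
rewrite -ET margT big_mkord mulrA; congr (_ * _).
rewrite {1}ET big_add1 /=.
have -> : (T + k.+1 - 1).-1 = (T + k - 1)%N by lia.
apply: eq_big_nat => j /andP[h1 h2].
congr (marg p _ _ s); lia.
Qed.

Lemma closed d k (s : word S T) : (1 <= m)%N -> (1 <= T)%N -> k = (m + d)%N ->
  \prod_(j < T + k - 1) marg p (maxn (j.+2 - k) 1) (minn j.+1 T) s =
  \prod_(j < T + m - 1) marg p (maxn (j.+2 - m) 1) (minn j.+1 T) s * p s ^+ d.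
Proof.
move=> m1 T1; elim: d k => [|d IH] k ->; first by rewrite addn0 expr0 mulr1.
rewrite addnS step //; last by lia.
by rewrite (IH (m + d)%N) // exprS; ring.
Qed.

End S.
Lemma f_pos (R : realType) (c z : R) : 0 < z ->
  (- c%:E * eln z = (- (c * ln z))%:E)%E.
Proof. by move=> z0; rewrite /eln gt_eqF //= -EFinM mulNr. Qed.

Lemma f_0 (R : realType) (c : R) : 0 < c -> (- c%:E * eln 0 = +oo)%E.
Proof. by move=> c0; rewrite /eln eqxx lt0_muleNy // lte_fin oppr_lt0. Qed.

Lemma eq_final (R : realType) (c x y : R) n : 0 < c -> 0 <= x -> 0 <= y ->
 (- c%:E * eln (x * y ^+ n) = - c%:E * eln x + (n%:R)%:E * (- c%:E * eln y))%E.
Proof.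
move=> c0 x0 y0.
case: n => [|n]; first by rewrite expr0 mulr1 mul0e adde0.
have Hne : forall z : R, 0 <= z -> (- c%:E * eln z != -oo)%E.
  move=> z; rewrite le0r => /orP[/eqP->|zp]; first by rewrite f_0.
  by rewrite f_pos.
have Hm : forall w : \bar R, (w != -oo -> (n.+1%:R)%:E * w != -oo)%E.
  by case=> [r| |] //= _; rewrite mulr_infty gtr0_sg ?ltr0Sn // mul1e.
have Hy := Hm _ (Hne _ y0).
move: x0 y0 Hy; rewrite !le0r => /orP[/eqP->|xp] /orP[/eqP->|yp] Hy.
- by rewrite mul0r [X in (X + _)%E]f_0 // addye // f_0.
- by rewrite mul0r f_0 // addye.
- by rewrite expr0n /= mulr0 !f_0 // mulr_infty gtr0_sg ?ltr0Sn // mul1e addey // f_pos.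
- rewrite !f_pos ?mulr_gt0 ?exprn_gt0 // -EFinM -EFinD; congr EFin.
  rewrite lnM ?posrE ?exprn_gt0 // lnXn //. rewrite -mulr_natl mulr1; ring.
Qed.

Theorem proposition7 (R : realType) (S : finType) (T m : nat)
    (p : word S T -> R) :
  (1 <= T)%N -> (1 <= m <= T)%N ->
  is_law p -> markov_order m p ->
  forall (s : word S T) (k : nat), (m <= k)%N ->
    Rbar p k s = (Rbar p m s + ((k - m)%:R)%:E * Rbar_inf p s)%E.
Proof.
move=> T1 /andP[m1 mT] law mk s k mk'.
rewrite /Rbar /Rbar_inf (@closed R S T m p law mk (k - m) k s m1 T1); last by lia.
apply: eq_final.
- by rewrite invr_gt0 ltr0n; lia.
- by apply: prodr_ge0 => j _; apply: marg_ge0.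
- by case: law.
Qed.
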